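(* Let $p$ be an odd prime, $r,k\in\mathbb{Z}_{>0}$, $\boldsymbol{T}=(T_1,\dots,T_r)$, and let $g(\boldsymbol{T})\in1+(T_1,\dots,T_r)^k\,\mathbb{Q}_p[[\boldsymbol{T}]]$ converge on some neighbourhood of $\boldsymbol{0}$ in $\mathbb{Q}_p^r$. Let $(\boldsymbol{x}^{(n)})_{n\ge0}$ be a sequence in $\mathbb{Q}_p^r$ with $\mathrm{ord}_p(x_i^{(n)})\ge n$ for all $n\ge0$ and $i=1,\dots,r$. Then $g(\boldsymbol{x}^{(n)})$ converges for all sufficiently large $n$, and for every integer $m<k$, \[\lim_{n\to\infty}\frac{1}{p^{mn}}\log_p\big(g(\boldsymbol{x}^{(n)})\big)=0.\]
   Context: $\log_p$ denotes the Iwasawa $p$-adic logarithm on $\mathbb{Q}_p^\times$ (normalised by $\log_p(p)=0$), and $\mathrm{ord}_p$ the $p$-adic valuation. *)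

(* Defs.v *)
(* There is no p-adic library available, so Q_p is given
   axiomatically: a field K with a valuation ord : K -> int such that
   ord p = 1, K is complete for ord and Q is dense in K.  Such a pair
   (K, ord) is unique up to valuation-preserving isomorphism (it is the
   completion of Q for the p-adic valuation), i.e. it IS Q_p. *)
From mathcomp Require Import all_boot all_order all_algebra.
From Stdlib Require Import ClassicalEpsilon.
Set Implicit Arguments. Unset Strict Implicit. Unset Printing Implicit Defensive.
Import Order.TTheory GRing.Theory Num.Theory.
Local Open Scope ring_scope.

Section Padic.
Variable K : fieldType.
Variable ord : K -> int.

(* "ord_p(x) >= N", with the convention ord_p(0) = +oo *)
Definition ordge (x : K) (N : int) : Prop := x = 0 \/ N <= ord x.

Definition conv_to (u : nat -> K) (l : K) : Prop :=
  forall N : int, exists M : nat, forall n : nat, (M <= n)%N -> ordge (u n - l) N.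

Definition cauchy (u : nat -> K) : Prop :=
  forall N : int, exists M : nat, forall m n : nat,
    (M <= m)%N -> (M <= n)%N -> ordge (u m - u n) N.

Record is_Qp (p : nat) : Prop := IsQp {
  ord_mul : forall x y, x != 0 -> y != 0 -> ord (x * y) = ord x + ord y;
  ord_add : forall x y, x != 0 -> y != 0 -> x + y != 0 ->
              Num.min (ord x) (ord y) <= ord (x + y);
  ord_p : ord (p%:R) = 1;
  Qp_complete : forall u, cauchy u -> exists l, conv_to u l;
  Qp_Q_dense : forall (z : K) (N : int), exists q : rat, ordge (z - ratr q) N
}.

(* a limit (chosen by classical choice; unique when it exists) *)
Definition lim_K (u : nat -> K) : K :=
  epsilon (inhabits 0) (fun l => conv_to u l).

Definition log_series (u : K) : K :=
  lim_K (fun n => \sum_(1 <= j < n.+1) (-1) ^+ j.+1 * (u - 1) ^+ j / j%:R).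

(* Iwasawa p-adic logarithm, log_p(p) = 0:
   for x = p^a * zeta * u (zeta a (p-1)-th root of unity, u in 1 + pZ_p),
   x^(p-1) * p^(-(p-1) a) = u^(p-1), so log_p x = log(u^(p-1)) / (p-1). *)
Definition logp (p : nat) (x : K) : K :=
  if x == 0 then 0 else
  log_series (x ^+ p.-1 * (p%:R) ^ (- (p.-1%:Z * ord x))) / (p.-1)%:R.

Definition mono (r : nat) (al : {ffun 'I_r -> nat}) (y : 'I_r -> K) : K :=
  \prod_(i < r) y i ^+ al i.

Definition deg (r : nat) (al : {ffun 'I_r -> nat}) : nat := \sum_(i < r) al i.

(* unconditional summability of a family indexed by multi-indices *)
Definition has_sum (r : nat) (t : {ffun 'I_r -> nat} -> K) (l : K) : Prop :=
  forall N : int, exists S0 : seq {ffun 'I_r -> nat},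
    forall S : seq {ffun 'I_r -> nat}, uniq S -> {subset S0 <= S} ->
      ordge (\sum_(al <- S) t al - l) N.

Definition ps_conv (r : nat) (a : {ffun 'I_r -> nat} -> K) (y : 'I_r -> K) : Prop :=
  exists l, has_sum (fun al => a al * mono al y) l.

Definition ps_eval (r : nat) (a : {ffun 'I_r -> nat} -> K) (y : 'I_r -> K) : K :=
  epsilon (inhabits 0) (fun l => has_sum (fun al => a al * mono al y) l).

End Padic.

(* Main.v *)
Require Import Defs.
From mathcomp Require Import all_boot all_order all_algebra.
From mathcomp Require Import zify ring.
From Stdlib Require Import ClassicalEpsilon.
Set Implicit Arguments. Unset Strict Implicit. Unset Printing Implicit Defensive.
Import Order.TTheory GRing.Theory Num.Theory.
Local Open Scope ring_scope.

Section Aux.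
Variable p : nat.
Variable K : fieldType.
Variable ord : K -> int.
Hypothesis HK : is_Qp ord p.
Hypothesis Hp : prime p.
Hypothesis Hodd : odd p.

Notation og := (ordge ord).

Lemma ord1 : ord 1 = 0.
Proof. have := ord_mul HK (oner_neq0 K) (oner_neq0 K). rewrite mulr1. set a := ord 1. lia. Qed.

Lemma ordN1 : ord (-1) = 0.
Proof.
have h : (-1 : K) != 0 by rewrite oppr_eq0 oner_neq0.
have := ord_mul HK h h. rewrite mulrNN mulr1 ord1. set a := ord _. lia.
Qed.

Lemma ordgeE x N : x != 0 -> og x N -> N <= ord x.
Proof. by move=> /negPf h [/eqP|]; rewrite ?h. Qed.

Lemma ordge_le x N M : M <= N -> og x N -> og x M.
Proof. move=> hMN [->|h]; [by left | right; exact: le_trans h]. Qed.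

Lemma og1 : og 1 0.
Proof. by right; rewrite ord1. Qed.

Lemma og11 : ~ og 1 1.
Proof. by move/(ordgeE (oner_neq0 K)); rewrite ord1. Qed.

Lemma ordge_add x y N : og x N -> og y N -> og (x + y) N.
Proof.
move=> hx hy.
have [->|x0] := eqVneq x 0; first by rewrite add0r.
have [->|y0] := eqVneq y 0; first by rewrite addr0.
have [->|s0] := eqVneq (x+y) 0; first by left.
right; have hx' := ordgeE x0 hx; have hy' := ordgeE y0 hy.
apply: le_trans (ord_add HK x0 y0 s0). by rewrite le_min hx' hy'.
Qed.

Lemma ordge_mul x y N M : og x N -> og y M -> og (x * y) (N + M).
Proof.
move=> hx hy.
have [->|x0] := eqVneq x 0; first by rewrite mul0r; left.
have [->|y0] := eqVneq y 0; first by rewrite mulr0; left.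
right; rewrite (ord_mul HK) //; exact: lerD (ordgeE x0 hx) (ordgeE y0 hy).
Qed.

Lemma ogN1 : og (-1) 0.
Proof. by right; rewrite ordN1. Qed.

Lemma ordge_opp x N : og x N -> og (- x) N.
Proof. move=> h; rewrite -mulN1r; have := ordge_mul ogN1 h; by rewrite add0r. Qed.

Lemma ordge_sub x y N : og x N -> og y N -> og (x - y) N.
Proof. by move=> hx hy; apply: ordge_add hx (ordge_opp hy). Qed.

Lemma ordge_exp x N j : og x N -> og (x ^+ j) (j%:Z * N).
Proof.
move=> hx; elim: j => [|j IH]; first by rewrite expr0 mul0r; exact: og1.
rewrite exprS; have := ordge_mul hx IH.
by rewrite -add1n PoszD mulrDl mul1r.
Qed.

Lemma ordge_big (I : Type) (s : seq I) (P : pred I) (F : I -> K) N :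
  (forall i, P i -> og (F i) N) -> og (\sum_(i <- s | P i) F i) N.
Proof.
move=> h; apply: (big_ind (fun z => og z N)) => //; first by left.
by move=> x y hx hy; apply: ordge_add.
Qed.

Lemma ordge_prod (I : Type) (s : seq I) (F : I -> K) (e : I -> nat) n :
  (forall i, og (F i) n) ->
  og (\prod_(i <- s) F i ^+ e i) ((\sum_(i <- s) e i)%N%:Z * n).
Proof.
move=> h; elim: s => [|i s IH]; first by rewrite !big_nil mul0r; exact: og1.
rewrite !big_cons; have := ordge_mul (ordge_exp (e i) (h i)) IH.
by rewrite PoszD mulrDl.
Qed.

Lemma ordge_nat n : og (n%:R) 0.
Proof.
elim: n => [|n IH]; first by left.
by rewrite -addn1 natrD; apply: ordge_add IH og1.
Qed.

Lemma ordge_int z : og (z%:~R) 0.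
Proof.
case: z => n; first exact: ordge_nat.
rewrite NegzE mulrNz; apply: ordge_opp; exact: ordge_nat.
Qed.

Lemma ord_inv x : x != 0 -> ord (x^-1) = - ord x.
Proof.
move=> x0; have := ord_mul HK x0 (invr_neq0 x0).
rewrite mulfV // ord1. lia.
Qed.

Lemma ord_pnat n : (p%:R : K) != 0 -> ord (p%:R ^+ n) = n%:Z.
Proof.
move=> hp; elim: n => [|n IH]; first by rewrite expr0 ord1.
rewrite exprS (ord_mul HK) ?expf_neq0 // IH (ord_p HK). lia.
Qed.

Lemma ogp : og (p%:R) 1.
Proof. have [->|hp] := eqVneq (p%:R : K) 0; [by left | by right; rewrite (ord_p HK)]. Qed.

Lemma ordge_pz z : og (p%:R ^ z) z.
Proof.
have [hp|hp] := eqVneq (p%:R : K) 0.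
  rewrite hp; case: z => [[|n]|n].
  - by rewrite expr0z; exact: og1.
  - by left; rewrite /exprz expr0n.
  - by left; rewrite /exprz expr0n invr0.
right; case: z => n.
  by rewrite /exprz ord_pnat.
have -> : (p%:R : K) ^ (Negz n) = (p%:R ^+ n.+1)^-1 by [].
by rewrite ord_inv ?expf_neq0 // ord_pnat // NegzE.
Qed.

Lemma nat_notdvd j : ~~ (p %| j)%N -> ~ og (j%:R) 1.
Proof.
move=> hpj hj.
have cop : coprime p j by rewrite prime_coprime.
have [a _ ha] := Bezoutl j (prime_gt0 Hp).
move: ha; rewrite (eqP cop) => /dvdnP [t ht].
have e : (1 : K) = t%:R * p%:R - a%:R * j%:R.
  by rewrite -!natrM -ht natrD mulr1n addrK.
apply: og11; rewrite e; apply: ordge_sub.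
  by have := ordge_mul (ordge_nat t) ogp; rewrite add0r.
by have := ordge_mul (ordge_nat a) hj; rewrite add0r.
Qed.

Lemma ord_nat_le j : (j%:R : K) != 0 -> ord (j%:R) <= (logn p j)%:Z.
Proof.
have [n] := ubnP j; elim: n j => // n IH j hjn hj0.
case: (boolP (p %| j)%N) => hpj.
- move: hjn hj0; have [j' ->] := dvdnP hpj => hjn.
  rewrite natrM mulf_eq0 negb_or => /andP[hj'0 hp0].
  have j'pos : (0 < j')%N.
    rewrite lt0n; apply/negP => /eqP e; move: hj'0; by rewrite e mulr0n eqxx.
  have p1 := prime_gt1 Hp.
  rewrite (ord_mul HK) // (ord_p HK) lognM // ?prime_gt0 // (logn_prime p Hp) eqxx.
  have := IH j' _ hj'0.
  have h : (j' < n)%N by nia.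
  move=> /(_ h); lia.
- rewrite logn_coprime ?prime_coprime //.
  rewrite leNgt; apply/negP => hlt; apply: (nat_notdvd hpj); right; lia.
Qed.

Lemma ordge_invnat j : og ((j%:R : K)^-1) (- (logn p j)%:Z).
Proof.
have [->|j0] := eqVneq (j%:R : K) 0; first by rewrite invr0; left.
right; rewrite ord_inv // lerN2; exact: ord_nat_le.
Qed.

Lemma pow3 e : (2 * e < 3 ^ e)%N.
Proof. elim: e => // e IH; rewrite expnS; lia. Qed.

Lemma logn_bound j : (0 < j)%N -> (2 * logn p j < j)%N.
Proof.
move=> j0.
have p3 : (2 < p)%N.
  move: Hp Hodd; case: p => [|[|[|q]]] //.
have h1 : (p ^ logn p j <= j)%N by apply: dvdn_leq => //; apply: pfactor_dvdnn.
have h2 : (3 ^ logn p j <= p ^ logn p j)%N.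
  case e: (logn p j) => [|e']; first by [].
  by rewrite leq_exp2r.
have := pow3 (logn p j); lia.
Qed.

Lemma ordge_pow1 g B j : 0 <= B -> og (g - 1) B -> og (g ^+ j - 1) B.
Proof.
move=> hB hg.
have hg0 : og g 0.
  have -> : g = (g - 1) + 1 by ring.
  by apply: ordge_add og1; apply: ordge_le hg.
elim: j => [|j IH]; first by rewrite expr0 subrr; left.
have -> : g ^+ j.+1 - 1 = g ^+ j * (g - 1) + (g ^+ j - 1) by rewrite exprS; ring.
apply: ordge_add IH.
have := ordge_mul (ordge_exp j hg0) hg; by rewrite mulr0 add0r.
Qed.

Lemma logp_bound g B : 1 <= B -> og (g - 1) B -> og (logp ord p g) B.
Proof.
move=> hB hg; rewrite /logp.
case: eqVneq => [_|g0]; first by left.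
have og0 : ord g = 0.
  have h1 : og g 0.
    have -> : g = 1 + (g - 1) by ring.
    apply: ordge_add; first exact: og1.
    apply: ordge_le hg; lia.
  have hn : ~ og g 1.
    move=> h; apply: og11.
    have -> : (1 : K) = g - (g - 1) by ring.
    exact: ordge_sub h (ordge_le hB hg).
  have hle := ordgeE g0 h1.
  apply/eqP; rewrite eq_le hle andbT leNgt; apply/negP => hlt; apply: hn; right; lia.
rewrite og0 mulr0 oppr0 expr0z mulr1.
have hu := ordge_pow1 p.-1 (ltW (lt_le_trans ltr01 hB)) hg.
set u := g ^+ p.-1 in hu *.
rewrite /log_series /lim_K.
pose S := fun n : nat => \sum_(1 <= j < n.+1) ((-1) ^+ j.+1 * (u - 1) ^+ j / j%:R).
change (og (epsilon (inhabits 0) (conv_to ord S) / (p.-1)%:R) B).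
have hT : forall j, (1 <= j)%N ->
  og ((-1) ^+ j.+1 * (u - 1) ^+ j / j%:R) (B + (j%:Z - 1 - (logn p j)%:Z)).
  move=> j hj; rewrite -mulrA.
  have := ordge_mul (ordge_exp j.+1 ogN1) (ordge_mul (ordge_exp j hu) (ordge_invnat j)).
  apply: ordge_le; rewrite mulr0 add0r. nia.
have hS : cauchy ord S.
  move=> N; exists (2 * `|N - B|%N + 1)%N.
  have main : forall m n, (2 * `|N - B|%N + 1 <= n)%N -> (n <= m)%N -> og (S m - S n) N.
    move=> m n hn hnm; rewrite /S (big_cat_nat _ (n:=n.+1)) //=.
    have -> : forall a b : K, a + b - a = b by move=> a b; ring.
    rewrite big_seq_cond; apply: ordge_big => j /andP[]; rewrite mem_index_iota => /andP[h1 h2] _.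
    have hj0 : (0 < j)%N by lia.
    apply: ordge_le (hT j hj0).
    have := logn_bound hj0; lia.
  move=> m n hm hn; case: (leqP n m) => hnm; first exact: main.
  have -> : S m - S n = - (S n - S m) by ring.
  apply: ordge_opp; apply: main => //; exact: ltnW.
have [l hl] := Qp_complete HK hS.
have hL := epsilon_spec (inhabits 0) (conv_to ord S) (ex_intro _ l hl).
set L := epsilon _ _ in hL *.
have hLB : og L B.
  have [M hM] := hL B.
  have hSM : og (S M) B.
    rewrite /S big_seq_cond; apply: ordge_big => j /andP[]; rewrite mem_index_iota => /andP[h1 h2] _.
    apply: ordge_le (hT j h1).
    have := logn_bound (j:=j) h1; lia.
  have -> : L = S M - (S M - L) by ring.
  apply: ordge_sub hSM (hM M (leqnn M)).
have hp1 : logn p p.-1 = 0%N.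
  apply: logn_coprime; rewrite prime_coprime //.
  have p1 := prime_gt1 Hp.
  apply/negP => /dvdn_leq; lia.
have := ordge_mul hLB (ordge_invnat p.-1).
by rewrite hp1 oppr0 addr0.
Qed.


Lemma nat_small (hp0 : (p%:R : K) = 0) n : (n%:R : K) != 0 -> ~ og (n%:R) 1.
Proof.
move=> hn; apply: nat_notdvd; apply/negP => /dvdnP [n' e].
by move: hn; rewrite e natrM hp0 mulr0 eqxx.
Qed.

Lemma int_small (hp0 : (p%:R : K) = 0) z : (z%:~R : K) != 0 -> ~ og (z%:~R) 1.
Proof.
case: z => n.
  rewrite -pmulrn; exact: nat_small.
rewrite NegzE mulrNz oppr_eq0 => hn h; apply: (nat_small hp0 hn).
by rewrite -[_%:R]opprK; apply: ordge_opp.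
Qed.

Lemma charp_triv (hp0 : (p%:R : K) = 0) z : z != 0 -> ~ og z 1.
Proof.
move=> z0 hz.
have hz1 := ordgeE z0 hz.
have [q hq] := Qp_Q_dense HK z (ord z + 1).
have [rq0|rq0] := eqVneq (ratr q : K) 0.
  move: hq; rewrite rq0 subr0 => /(ordgeE z0); lia.
have hr : og (ratr q) 1.
  have -> : (ratr q : K) = z - (z - ratr q) by ring.
  apply: ordge_sub hz (ordge_le _ hq); lia.
move: rq0 hr; rewrite /ratr.
set A := (numq q)%:~R; set D := (denq q)%:~R.
have [->|D0] := eqVneq (D : K) 0; first by rewrite invr0 mulr0 eqxx.
rewrite mulf_eq0 negb_or invr_eq0 => /andP[A0 _] hr.
apply: (int_small hp0 A0).
have := ordge_mul hr (ordge_int (denq q)); by rewrite addr0 mulfVK.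
Qed.

Lemma ffun_nz r (al : {ffun 'I_r -> nat}) : al != [ffun => 0%N] -> exists i, al i != 0%N.
Proof.
move=> hal; case: (pickP (fun i => al i != 0%N)) => [i hi|h]; first by exists i.
move/eqP: hal; case; apply/ffunP => i; rewrite ffunE; apply/eqP.
by move: (h i) => /negbFE.
Qed.

Lemma deg_pos r (al : {ffun 'I_r -> nat}) : al != [ffun => 0%N] -> (0 < deg al)%N.
Proof.
move=> /ffun_nz [i hi]; rewrite /deg (bigD1 i) //=; lia.
Qed.

Lemma main_lem (r k : nat)
  (a : {ffun 'I_r -> nat} -> K) (x : nat -> 'I_r -> K) :
  (0 < r)%N -> (0 < k)%N ->
  a [ffun => 0%N] = 1 ->
  (forall al : {ffun 'I_r -> nat}, (0 < deg al < k)%N -> a al = 0) ->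
  (exists N : int, forall y : 'I_r -> K,
     (forall i, ordge ord (y i) N) -> ps_conv ord a y) ->
  (forall (n : nat) (i : 'I_r), ordge ord (x n i) n%:Z) ->
  (exists n0 : nat, forall n : nat, (n0 <= n)%N -> ps_conv ord a (x n)) /\
  (forall m : int, m < k%:Z ->
     conv_to ord
       (fun n : nat => (p%:R : K) ^ (- (m * n%:Z)) * logp ord p (ps_eval ord a (x n)))
       0).
Proof.
move=> r0 k0 a0 aK [N HN] Hx.
pose n0 := `|N|%N.
have Hconv : forall n, (n0 <= n)%N -> ps_conv ord a (x n).
  move=> n hn; apply: HN => i; apply: ordge_le (Hx n i); lia.
split; first by exists n0.
have key : exists (n1 : nat) (C : int), forall n, (n1 <= n)%N ->
    forall al, al != [ffun => 0%N] ->
    og (a al * mono al (x n)) ((n%:Z - n1%:Z) * k%:Z - C).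
  have [hp0|hp0] := eqVneq (p%:R : K) 0.
    exists 1%N, 0 => n hn al hal.
    have [i hi] := ffun_nz hal.
    have x0 : x n i = 0.
      apply/eqP; apply/negP => /negP h; apply: (charp_triv hp0 h).
      apply: ordge_le (Hx n i); lia.
    rewrite /mono (bigD1 i) //= x0 expr0n (negPf hi) !mul0r mulr0; by left.
  pose c : K := p%:R ^+ n0.
  have [l0 hl0] : ps_conv ord a (fun _ => c).
    apply: HN => i; right; rewrite /c ord_pnat //; lia.
  pose t := fun al => a al * mono al (fun _ : 'I_r => c).
  have [S0 hS0] := hl0 0.
  have out : forall al, al \notin S0 -> og (t al) 0.
    move=> al hal.
    have h1 : og (\sum_(b <- undup S0) t b - l0) 0.
      apply: hS0; [exact: undup_uniq | by move=> z; rewrite mem_undup].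
    have h2 : og (\sum_(b <- al :: undup S0) t b - l0) 0.
      apply: hS0; first by rewrite /= mem_undup hal undup_uniq.
      by move=> z hz; rewrite inE mem_undup hz orbT.
    rewrite big_cons in h2.
    have -> : t al = (t al + \sum_(b <- undup S0) t b - l0) - (\sum_(b <- undup S0) t b - l0) by ring.
    exact: ordge_sub h2 h1.
  pose C := \max_(b <- S0) `|ord (t b)|%N.
  have tall : forall al, og (t al) (- C%:Z).
    move=> al; case: (boolP (al \in S0)) => hin.
      have [->|t0] := eqVneq (t al) 0; first by left.
      right; have hle : (`|ord (t al)| <= C)%N.
        by rewrite /C; apply: (@leq_bigmax_seq _ S0 (fun _ => true)).
      move: hle; set o := ord (t al); lia.
    apply: ordge_le (out al hin); lia.
  have coef : forall al, a al != 0 -> - C%:Z - (n0 * deg al)%N%:Z <= ord (a al).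
    move=> al hal.
    have cd : mono al (fun _ => c) = p%:R ^+ (n0 * deg al).
      by rewrite /mono prodrXr /c exprM.
    have ht0 : t al != 0 by rewrite /t cd mulf_neq0 // expf_neq0.
    have := ordgeE ht0 (tall al).
    rewrite /t cd (ord_mul HK) ?expf_neq0 // ord_pnat //.
    set o := ord (a al); lia.
  exists n0, C => n hn al hal.
  have [->|ha0] := eqVneq (a al) 0; first by rewrite mul0r; left.
  have dk : (k <= deg al)%N.
    rewrite leqNgt; apply/negP => hlt; move/eqP: ha0; apply; apply: aK.
    by rewrite deg_pos // hlt.
  have hm : og (mono al (x n)) ((deg al)%:Z * n%:Z).
    by apply: ordge_prod => i; exact: Hx.
  have := ordge_mul (or_intror (lexx (ord (a al))) : og (a al) (ord (a al))) hm.
  apply: ordge_le.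
  have := coef al ha0; set o := ord (a al); nia.
have [n1 [C key']] := key.
move=> m hm N'.
exists (n0 + n1 + (`|C|%N + n1 * k + `|N'|%N + 1))%N => n hn.
rewrite subr0.
have hn0 : (n0 <= n)%N by lia.
have hps := epsilon_spec (inhabits 0) _ (Hconv n hn0).
rewrite /ps_eval; set g := epsilon _ _ in hps *.
pose B := (n%:Z - n1%:Z) * k%:Z - C.
have hB1 : 1 <= B by rewrite /B; nia.
have hg : og (g - 1) B.
  have [S0 hS0] := hps B.
  pose S := [ffun => 0%N] :: [seq al <- undup S0 | al != [ffun => 0%N]].
  have hsum : og (\sum_(al <- undup S0 | al != [ffun => 0%N]) (a al * mono al (x n))) B.
    apply: ordge_big => al hal; apply: key' => //; lia.
  have t0 : a [ffun => 0%N] * mono [ffun => 0%N] (x n) = 1.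
    rewrite a0 mul1r /mono; apply: big1 => i _; by rewrite ffunE expr0.
  have h : og (\sum_(al <- S) (a al * mono al (x n)) - g) B.
    apply: hS0.
      by rewrite /S /= mem_filter eqxx /= filter_uniq // undup_uniq.
    move=> al hal; rewrite /S inE mem_filter mem_undup hal andbT; exact: orbN.
  move: h; rewrite /S big_cons big_filter t0 => h.
  set s := \sum_(al <- _ | _) _ in hsum h.
  have -> : g - 1 = s - ((1 + s) - g) by ring.
  exact: ordge_sub hsum h.
have hlog := logp_bound hB1 hg.
have := ordge_mul (ordge_pz (- (m * n%:Z))) hlog.
apply: ordge_le; rewrite /B; nia.
Qed.

End Aux.

Theorem lemma3p8 (p : nat) (K : fieldType) (ord : K -> int)
  (HK : is_Qp ord p) (r k : nat)
  (a : {ffun 'I_r -> nat} -> K) (x : nat -> 'I_r -> K) :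
  prime p -> odd p -> (0 < r)%N -> (0 < k)%N ->
  (* g in 1 + (T_1,...,T_r)^k Q_p[[T]] *)
  a [ffun => 0%N] = 1 ->
  (forall al : {ffun 'I_r -> nat}, (0 < deg al < k)%N -> a al = 0) ->
  (* g converges on a neighbourhood of 0 *)
  (exists N : int, forall y : 'I_r -> K,
     (forall i, ordge ord (y i) N) -> ps_conv ord a y) ->
  (* ord_p(x_i^(n)) >= n *)
  (forall (n : nat) (i : 'I_r), ordge ord (x n i) n%:Z) ->
  (exists n0 : nat, forall n : nat, (n0 <= n)%N -> ps_conv ord a (x n)) /\
  (forall m : int, m < k%:Z ->
     conv_to ord
       (fun n : nat => (p%:R : K) ^ (- (m * n%:Z)) * logp ord p (ps_eval ord a (x n)))
       0).
Proof.
move=> Hp Hodd; exact: (main_lem HK Hp Hodd).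
Qed.
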